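(* Let $X$ be a strictly convex Banach space such that every finite subset of $\ell_2$ admits an isometric embedding into $X$, but $\ell_2$ does not admit an isomorphic (linear) embedding into $X$. Then $D(X)>1$; that is, there exist a locally finite metric space $A$ and a constant $C\ge 1$ such that every finite subset of $A$ admits a bilipschitz embedding into $X$ with distortion $\le C$, but $A$ admits no bilipschitz embedding into $X$ with distortion $\le C$. *)

(* Defs.v *)
From Stdlib Require Import Reals List.
Open Scope R_scope.

Record Banach := {
  bcar :> Type;
  vzero : bcar;
  vadd : bcar -> bcar -> bcar;
  vopp : bcar -> bcar;
  vscal : R -> bcar -> bcar;
  vnorm : bcar -> R;
  vadd_assoc : forall x y z, vadd x (vadd y z) = vadd (vadd x y) z;
  vadd_comm : forall x y, vadd x y = vadd y x;
  vadd_0 : forall x, vadd x vzero = x;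
  vadd_opp : forall x, vadd x (vopp x) = vzero;
  vscal_1 : forall x, vscal 1 x = x;
  vscal_assoc : forall a b x, vscal a (vscal b x) = vscal (a * b) x;
  vscal_addR : forall a b x, vscal (a + b) x = vadd (vscal a x) (vscal b x);
  vscal_addV : forall a x y, vscal a (vadd x y) = vadd (vscal a x) (vscal a y);
  vnorm_eq0 : forall x, vnorm x = 0 -> x = vzero;
  vnorm_scal : forall a x, vnorm (vscal a x) = Rabs a * vnorm x;
  vnorm_triangle : forall x y, vnorm (vadd x y) <= vnorm x + vnorm y;
  vcomplete : forall u : nat -> bcar,
    (forall eps, 0 < eps -> exists N, forall m n, (N <= m)%nat -> (N <= n)%nat ->
        vnorm (vadd (u m) (vopp (u n))) < eps) ->
    exists l, forall eps, 0 < eps -> exists N, forall n, (N <= n)%nat ->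
        vnorm (vadd (u n) (vopp l)) < eps
}.

Definition vsub (X : Banach) (x y : X) : X := vadd X x (vopp X y).

Definition strictly_convex (X : Banach) : Prop :=
  forall x y : X, vnorm X x = 1 -> vnorm X y = 1 -> x <> y ->
    vnorm X (vscal X (1/2) (vadd X x y)) < 1.

Definition l2 : Type :=
  { a : nat -> R | exists s, infinite_sum (fun n => (a n) ^ 2) s }.

Definition l2_dist_is (x y : l2) (d : R) : Prop :=
  0 <= d /\ infinite_sum (fun n => (proj1_sig x n - proj1_sig y n) ^ 2) (d ^ 2).

Definition l2_norm_is (x : l2) (d : R) : Prop :=
  0 <= d /\ infinite_sum (fun n => (proj1_sig x n) ^ 2) (d ^ 2).

Definition l2_finitely_isometric (X : Banach) : Prop :=
  forall s : list l2, exists f : l2 -> X,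
    forall x y d, In x s -> In y s -> l2_dist_is x y d ->
      vnorm X (vsub X (f x) (f y)) = d.

Definition l2_isomorphic_embeds (X : Banach) : Prop :=
  exists (T : l2 -> X) (c K : R), 0 < c /\
    (forall (x y z : l2) (a b : R),
        (forall n, proj1_sig z n = a * proj1_sig x n + b * proj1_sig y n) ->
        T z = vadd X (vscal X a (T x)) (vscal X b (T y))) /\
    (forall x d, l2_norm_is x d -> c * d <= vnorm X (T x) <= K * d).

Record MetricSpace := {
  mcar :> Type;
  mdist : mcar -> mcar -> R;
  mdist_eq0 : forall x y, mdist x y = 0 <-> x = y;
  mdist_sym : forall x y, mdist x y = mdist y x;
  mdist_triangle : forall x y z, mdist x z <= mdist x y + mdist y z
}.

Definition locally_finite (A : MetricSpace) : Prop :=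
  forall (x : A) (r : R), exists s : list A,
    forall y, mdist A x y <= r -> In y s.

Definition bilip_embeds_le (A : MetricSpace) (X : Banach) (P : A -> Prop) (C : R) : Prop :=
  exists (f : A -> X) (r : R), 0 < r /\
    forall x y, P x -> P y ->
      r * mdist A x y <= vnorm X (vsub X (f x) (f y)) <= C * r * mdist A x y.

(* Main.v *)
Require Import Defs.
From Stdlib Require Import Reals ZArith List Lra Lia ClassicalEpsilon Classical.
Open Scope R_scope.

Section Vec.
Variable X : Banach.

Lemma vadd_0l (x : X) : vadd X (vzero X) x = x.
Proof. rewrite vadd_comm; apply vadd_0. Qed.

Lemma vadd_cancel_r (a b c : X) : vadd X a c = vadd X b c -> a = b.
Proof.
  intro H.
  rewrite <- (vadd_0 X a), <- (vadd_0 X b), <- (vadd_opp X c).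
  rewrite !vadd_assoc, H; reflexivity.
Qed.

Lemma vscal_0l (x : X) : vscal X 0 x = vzero X.
Proof.
  apply (vadd_cancel_r _ _ (vscal X 0 x)).
  rewrite <- vscal_addR, Rplus_0_l, vadd_0l; reflexivity.
Qed.

Lemma vscal_0r (a : R) : vscal X a (vzero X) = vzero X.
Proof.
  rewrite <- (vscal_0l (vzero X)) at 1.
  rewrite vscal_assoc, Rmult_0_r; apply vscal_0l.
Qed.

Lemma vopp_scal (x : X) : vopp X x = vscal X (-1) x.
Proof.
  symmetry; apply (vadd_cancel_r _ _ x).
  rewrite <- (vscal_1 X x) at 2.
  rewrite <- vscal_addR.
  replace (-1 + 1) with 0 by ring.
  rewrite vscal_0l, vadd_comm, vadd_opp; reflexivity.
Qed.

Lemma vnorm_0 : vnorm X (vzero X) = 0.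
Proof.
  rewrite <- (vscal_0l (vzero X)), vnorm_scal, Rabs_R0; ring.
Qed.

Lemma vnorm_opp (x : X) : vnorm X (vopp X x) = vnorm X x.
Proof.
  rewrite vopp_scal, vnorm_scal.
  replace (Rabs (-1)) with 1 by (unfold Rabs; destruct Rcase_abs; lra); ring.
Qed.

Lemma vnorm_nonneg (x : X) : 0 <= vnorm X x.
Proof.
  pose proof (vnorm_triangle X x (vopp X x)) as H.
  rewrite vadd_opp, vnorm_0, vnorm_opp in H. lra.
Qed.

Lemma vsub_eq0 (x y : X) : vsub X x y = vzero X -> x = y.
Proof.
  unfold vsub; intro H. apply (vadd_cancel_r _ _ (vopp X y)).
  rewrite H, vadd_opp; reflexivity.
Qed.

Lemma vsub_diag (x : X) : vsub X x x = vzero X.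
Proof. apply vadd_opp. Qed.

Lemma vopp_add (a b : X) : vopp X (vadd X a b) = vadd X (vopp X a) (vopp X b).
Proof. rewrite !vopp_scal; apply vscal_addV. Qed.

Lemma vopp_opp (a : X) : vopp X (vopp X a) = a.
Proof. rewrite !vopp_scal, vscal_assoc. replace (-1 * -1) with 1 by ring. apply vscal_1. Qed.

Lemma vshuffle (a b c d : X) :
  vadd X (vadd X a b) (vadd X c d) = vadd X (vadd X a c) (vadd X b d).
Proof.
  rewrite !vadd_assoc. f_equal.
  rewrite <- !vadd_assoc. f_equal. apply vadd_comm.
Qed.

Lemma vsub_opp (x y : X) : vsub X y x = vopp X (vsub X x y).
Proof. unfold vsub. rewrite vopp_add, vopp_opp, vadd_comm. reflexivity. Qed.

Lemma vnorm_sub_sym (x y : X) : vnorm X (vsub X x y) = vnorm X (vsub X y x).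
Proof. rewrite (vsub_opp x y), vnorm_opp; reflexivity. Qed.

Lemma vsub_add (p m q : X) : vadd X (vsub X m p) (vsub X q m) = vsub X q p.
Proof.
  unfold vsub. rewrite (vadd_comm X (vadd X m _)).
  rewrite <- vadd_assoc. f_equal.
  rewrite vadd_assoc, (vadd_comm X (vopp X m)), vadd_opp, vadd_0l. reflexivity.
Qed.

Lemma vscal_opp (c : R) (y : X) : vscal X c (vopp X y) = vopp X (vscal X c y).
Proof. rewrite !vopp_scal, !vscal_assoc. f_equal; ring. Qed.

Lemma vscal_sub (c : R) (x y : X) :
  vscal X c (vsub X x y) = vsub X (vscal X c x) (vscal X c y).
Proof. unfold vsub. rewrite vscal_addV, vscal_opp. reflexivity. Qed.

Lemma vsub_common (a b e : X) : vsub X (vsub X a e) (vsub X b e) = vsub X a b.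
Proof.
  unfold vsub. rewrite vopp_add, vopp_opp, vshuffle.
  rewrite (vadd_comm X (vopp X e)), vadd_opp, vadd_0. reflexivity.
Qed.

Lemma vnorm_eq0_iff (x y : X) : vnorm X (vsub X x y) = 0 -> x = y.
Proof. intro H. apply vsub_eq0, vnorm_eq0, H. Qed.

Lemma SCeq_aux (Hsc : strictly_convex X) (u v : X) :
  0 < vnorm X u -> vnorm X u <= vnorm X v ->
  vnorm X (vadd X u v) = vnorm X u + vnorm X v ->
  vscal X (vnorm X v) u = vscal X (vnorm X u) v.
Proof.
  set (a := vnorm X u). set (b := vnorm X v). intros Ha Hab Heq.
  assert (Hb : 0 < b) by lra.
  set (u' := vscal X (/a) u). set (v' := vscal X (/b) v).
  assert (Hu : u = vscal X a u').
  { unfold u'. rewrite vscal_assoc, Rinv_r by lra. now rewrite vscal_1. }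
  assert (Hv : v = vscal X b v').
  { unfold v'. rewrite vscal_assoc, Rinv_r by lra. now rewrite vscal_1. }
  assert (Nu : vnorm X u' = 1).
  { unfold u'. rewrite vnorm_scal, Rabs_right by (apply Rle_ge, Rlt_le, Rinv_0_lt_compat; lra).
    fold a. field. lra. }
  assert (Nv : vnorm X v' = 1).
  { unfold v'. rewrite vnorm_scal, Rabs_right by (apply Rle_ge, Rlt_le, Rinv_0_lt_compat; lra).
    fold b. field. lra. }
  destruct (classic (u' = v')) as [E|NE].
  - rewrite Hu, Hv, E, !vscal_assoc. f_equal; ring.
  - exfalso. pose proof (Hsc u' v' Nu Nv NE) as Hs.
    rewrite vnorm_scal, Rabs_right in Hs by lra.
    assert (Huv : vadd X u v = vadd X (vscal X a (vadd X u' v')) (vscal X (b - a) v')).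
    { rewrite vscal_addV, <- vadd_assoc, <- vscal_addR.
      replace (a + (b - a)) with b by ring. rewrite <- Hu, <- Hv. reflexivity. }
    pose proof (vnorm_triangle X (vscal X a (vadd X u' v')) (vscal X (b - a) v')) as T.
    rewrite <- Huv, !vnorm_scal, Nv, (Rabs_right a), (Rabs_right (b-a)) in T by lra.
    assert (a * vnorm X (vadd X u' v') < a * 2).
    { apply Rmult_lt_compat_l; lra. }
    fold a b in Heq. lra.
Qed.

Lemma SCeq (Hsc : strictly_convex X) (u v : X) :
  vnorm X (vadd X u v) = vnorm X u + vnorm X v ->
  vscal X (vnorm X v) u = vscal X (vnorm X u) v.
Proof.
  intro Heq.
  destruct (Req_dec (vnorm X u) 0) as [Hu0|Hu0].
  { pose proof (vnorm_eq0 X u Hu0) as E. rewrite Hu0, E, vscal_0r, vscal_0l. reflexivity. }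
  destruct (Req_dec (vnorm X v) 0) as [Hv0|Hv0].
  { pose proof (vnorm_eq0 X v Hv0) as E. rewrite Hv0, E, vscal_0r, vscal_0l. reflexivity. }
  pose proof (vnorm_nonneg u). pose proof (vnorm_nonneg v).
  destruct (Rle_dec (vnorm X u) (vnorm X v)).
  - apply SCeq_aux; auto; lra.
  - symmetry. apply SCeq_aux; auto; try lra. rewrite vadd_comm; lra.
Qed.

Lemma collinear (Hsc : strictly_convex X) (p m q : X) (s D : R) :
  0 <= s <= 1 ->
  vnorm X (vsub X m p) = s * D -> vnorm X (vsub X q m) = (1 - s) * D ->
  vnorm X (vsub X q p) = D ->
  vsub X m p = vscal X s (vsub X q p).
Proof.
  intros Hs H1 H2 H3.
  set (u := vsub X m p) in *. set (v := vsub X q m) in *.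
  assert (Huv : vadd X u v = vsub X q p) by apply vsub_add.
  destruct (Req_dec D 0) as [D0|D0].
  { rewrite D0 in H1, H3. rewrite Rmult_0_r in H1.
    rewrite (vnorm_eq0 X _ H1), (vnorm_eq0 X _ H3), vscal_0r. reflexivity. }
  assert (E := SCeq Hsc u v).
  rewrite Huv, H1, H2, H3 in E. specialize (E ltac:(ring)).
  assert (E2 : vscal X (1 - s) u = vscal X s v).
  { apply (f_equal (vscal X (/D))) in E. rewrite !vscal_assoc in E.
    replace (/ D * ((1 - s) * D)) with (1 - s) in E by (field; auto).
    replace (/ D * (s * D)) with s in E by (field; auto). exact E. }
  rewrite <- Huv, vscal_addV, <- E2, <- vscal_addR.
  replace (s + (1 - s)) with 1 by ring. symmetry; apply vscal_1.
Qed.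

End Vec.

Definition sqs (u : nat -> R) := exists s, infinite_sum (fun n => (u n)^2) s.
Definition sdist (u v : nat -> R) (d : R) :=
  0 <= d /\ infinite_sum (fun n => (u n - v n)^2) (d^2).

Lemma isum_ext (a b : nat -> R) s :
  (forall n, a n = b n) -> infinite_sum a s -> infinite_sum b s.
Proof.
  intros E H eps Heps. destruct (H eps Heps) as [N HN]. exists N. intros n Hn.
  rewrite <- (sum_eq a b n) by (intros; apply E). apply HN; auto.
Qed.

Lemma isum_uniq a s t : infinite_sum a s -> infinite_sum a t -> s = t.
Proof. intros H1 H2. exact (UL_sequence _ _ _ H1 H2). Qed.

Lemma isum_plus a b s t :
  infinite_sum a s -> infinite_sum b t -> infinite_sum (fun n => a n + b n) (s + t).
Proof.
  intros H1 H2. pose proof (CV_plus _ _ _ _ H1 H2) as H.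
  intros eps Heps. destruct (H eps Heps) as [N HN]. exists N. intros n Hn.
  rewrite plus_sum. apply HN; auto.
Qed.

Lemma isum_scal a s c :
  infinite_sum a s -> infinite_sum (fun n => c * a n) (c * s).
Proof.
  intros H eps Heps.
  destruct (H (eps / (Rabs c + 1))) as [N HN].
  { apply Rdiv_lt_0_compat; auto. pose proof (Rabs_pos c); lra. }
  exists N. intros n Hn.
  replace (sum_f_R0 (fun n => c * a n) n) with (c * sum_f_R0 a n).
  2:{ rewrite scal_sum. apply sum_eq. intros; ring. }
  specialize (HN n Hn). unfold R_dist in *.
  replace (c * sum_f_R0 a n - c * s) with (c * (sum_f_R0 a n - s)) by ring.
  rewrite Rabs_mult. pose proof (Rabs_pos c).
  apply Rle_lt_trans with ((Rabs c + 1) * Rabs (sum_f_R0 a n - s)).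
  { apply Rmult_le_compat_r; [apply Rabs_pos| lra]. }
  apply Rlt_le_trans with ((Rabs c + 1) * (eps / (Rabs c + 1))).
  { apply Rmult_lt_compat_l; lra. }
  right; field; lra.
Qed.

Lemma psum_stable a N n :
  (forall i, (N < i)%nat -> a i = 0) -> (N <= n)%nat -> sum_f_R0 a n = sum_f_R0 a N.
Proof.
  intros Ha Hn. induction Hn as [|m Hm IH]; auto.
  rewrite tech5, IH, (Ha (S m)) by lia. ring.
Qed.

Lemma isum_fin a N :
  (forall i, (N < i)%nat -> a i = 0) -> infinite_sum a (sum_f_R0 a N).
Proof.
  intros Ha eps Heps. exists N. intros n Hn. rewrite (psum_stable a N n Ha Hn).
  unfold R_dist. rewrite Rminus_diag, Rabs_R0; auto.
Qed.

Lemma psum_mono a n m :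
  (forall i, 0 <= a i) -> (n <= m)%nat -> sum_f_R0 a n <= sum_f_R0 a m.
Proof.
  intros Ha H. induction H; [lra|]. rewrite tech5. specialize (Ha (S m)). lra.
Qed.

Lemma psum_le a s n :
  (forall i, 0 <= a i) -> infinite_sum a s -> sum_f_R0 a n <= s.
Proof.
  intros Ha H. destruct (Rle_dec (sum_f_R0 a n) s) as [|NH]; auto. exfalso.
  destruct (H (sum_f_R0 a n - s)) as [N HN]; [lra|].
  specialize (HN (Nat.max N n) ltac:(lia)).
  pose proof (psum_mono a n (Nat.max N n) Ha ltac:(lia)).
  unfold R_dist in HN. rewrite Rabs_right in HN by lra. lra.
Qed.

Lemma term_le_psum a n : (forall i, 0 <= a i) -> a n <= sum_f_R0 a n.
Proof.
  intros Ha. destruct n; simpl; [lra|].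
  pose proof (psum_mono a 0 n Ha ltac:(lia)). simpl in H. specialize (Ha 0%nat). lra.
Qed.

Lemma isum_nonneg a s : (forall i, 0 <= a i) -> infinite_sum a s -> 0 <= s.
Proof.
  intros Ha H. pose proof (psum_le a s 0 Ha H). simpl in H0. specialize (Ha 0%nat). lra.
Qed.

Lemma term_le_isum a s n : (forall i, 0 <= a i) -> infinite_sum a s -> a n <= s.
Proof.
  intros Ha H. pose proof (term_le_psum a n Ha). pose proof (psum_le a s n Ha H). lra.
Qed.

Lemma isum_comp a b sb :
  (forall n, 0 <= a n <= b n) -> infinite_sum b sb -> exists sa, infinite_sum a sa.
Proof.
  intros Hab Hb. destruct (Rseries_CV_comp a b Hab (exist _ sb Hb)) as [sa Hsa].
  exists sa. exact Hsa.
Qed.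

Definition shift (c : R) (a : nat -> R) (i : nat) : R :=
  match i with O => c | S j => a j end.

Lemma psum_shift c a n :
  sum_f_R0 (shift c a) (S n) = c + sum_f_R0 a n.
Proof.
  induction n.
  - simpl. reflexivity.
  - rewrite tech5, IHn, tech5. simpl. ring.
Qed.

Lemma isum_shift c a s :
  infinite_sum a s -> infinite_sum (shift c a) (c + s).
Proof.
  intros H eps Heps. destruct (H eps Heps) as [N HN]. exists (S N).
  intros n Hn. destruct n; [lia|]. rewrite psum_shift. unfold R_dist.
  replace (c + sum_f_R0 a n - (c + s)) with (sum_f_R0 a n - s) by ring.
  apply HN. lia.
Qed.

Definition mask (k : nat) (a : nat -> R) (i : nat) : R :=
  if (i <=? k)%nat then 0 else a i.

Lemma psum_mask a k n : (k <= n)%nat ->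
  sum_f_R0 (mask k a) n = sum_f_R0 a n - sum_f_R0 a k.
Proof.
  intros H. induction H.
  - rewrite (sum_eq _ (fun _ => 0)).
    + clear. induction k; simpl; [ring|]. rewrite IHk. ring.
    + intros i Hi. unfold mask. destruct (Nat.leb_spec i k); [auto|lia].
  - rewrite !tech5, IHle. unfold mask. destruct (Nat.leb_spec (S m) k); [lia|]. ring.
Qed.

Lemma isum_mask a s k :
  infinite_sum a s -> infinite_sum (mask k a) (s - sum_f_R0 a k).
Proof.
  intros H eps Heps. destruct (H eps Heps) as [N HN]. exists (Nat.max N k).
  intros n Hn. rewrite psum_mask by lia. unfold R_dist.
  replace (sum_f_R0 a n - sum_f_R0 a k - (s - sum_f_R0 a k)) with (sum_f_R0 a n - s) by ring.
  apply HN. lia.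
Qed.

Lemma pow2_nonneg x : 0 <= x ^ 2.
Proof. nra. Qed.

Lemma sqs_fin u N : (forall i, (N < i)%nat -> u i = 0) -> sqs u.
Proof.
  intro H. exists (sum_f_R0 (fun n => u n ^ 2) N). apply isum_fin.
  intros i Hi. rewrite H by auto. ring.
Qed.

Lemma sdist_ex u v : sqs u -> sqs v -> exists d, sdist u v d.
Proof.
  intros [s Hs] [t Ht].
  assert (Hb := isum_plus _ _ _ _ (isum_scal _ _ 2 Hs) (isum_scal _ _ 2 Ht)).
  assert (Hab : forall n, 0 <= (u n - v n)^2 <= 2 * u n ^ 2 + 2 * v n ^ 2).
  { intros n. split; [apply pow2_nonneg|]. pose proof (pow2_nonneg (u n + v n)). nra. }
  destruct (isum_comp (fun n => (u n - v n)^2) _ _ Hab Hb) as [sa Hsa].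
  assert (0 <= sa) by (eapply isum_nonneg; [|exact Hsa]; intros; apply pow2_nonneg).
  exists (sqrt sa). split; [apply sqrt_pos|]. rewrite pow2_sqrt; auto.
Qed.

Lemma sdist_uniq u v d d' : sdist u v d -> sdist u v d' -> d = d'.
Proof.
  intros [H1 H2] [H3 H4]. pose proof (isum_uniq _ _ _ H2 H4).
  rewrite <- (sqrt_pow2 d), <- (sqrt_pow2 d'), H; auto.
Qed.

Lemma sdist_scale u v u' v' d c :
  sdist u v d -> 0 <= c -> (forall i, (u' i - v' i)^2 = c^2 * (u i - v i)^2) ->
  sdist u' v' (c * d).
Proof.
  intros [H1 H2] Hc E. split; [nra|].
  apply (isum_ext (fun n => c^2 * (u n - v n)^2)); [intros; auto|].
  replace ((c*d)^2) with (c^2 * d^2) by ring. apply isum_scal; auto.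
Qed.

Lemma sdist_ext u v u' v' d :
  sdist u v d -> (forall i, (u' i - v' i)^2 = (u i - v i)^2) -> sdist u' v' d.
Proof.
  intros H E. replace d with (1 * d) by ring. eapply sdist_scale; eauto; [lra|].
  intros; rewrite E; ring.
Qed.

Lemma sdist_sym u v d : sdist u v d -> sdist v u d.
Proof. intros H. eapply sdist_ext; eauto. intros; ring. Qed.

Lemma sdist_refl u : sdist u u 0.
Proof.
  split; [lra|]. apply (isum_ext (fun _ => 0)); [intros; ring|].
  replace (0^2) with (sum_f_R0 (fun _ => 0) 0) by (simpl; ring). apply isum_fin; auto.
Qed.

Lemma sdist_coord u v d i : sdist u v d -> (u i - v i)^2 <= d^2.
Proof. intros [_ H]. apply (term_le_isum (fun n => (u n - v n)^2)); auto. intros; apply pow2_nonneg. Qed.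

Lemma sdist_zero u v : sdist u v 0 -> forall i, u i = v i.
Proof.
  intros H i. pose proof (sdist_coord u v 0 i H). nra.
Qed.

Lemma sdist_fin u v N : (forall i, (N < i)%nat -> u i = v i) ->
  sdist u v (sqrt (sum_f_R0 (fun i => (u i - v i)^2) N)).
Proof.
  intro H. assert (0 <= sum_f_R0 (fun i => (u i - v i)^2) N).
  { apply cond_pos_sum. intros; apply pow2_nonneg. }
  split; [apply sqrt_pos|]. rewrite pow2_sqrt by auto. apply isum_fin.
  intros i Hi. rewrite H by auto. ring.
Qed.

Section Tri.
Variable X : Banach.
Hypothesis Hfin : l2_finitely_isometric X.

Lemma sdist_tri u v w d1 d2 d3 : sqs u -> sqs v -> sqs w ->
  sdist u v d1 -> sdist v w d2 -> sdist u w d3 -> d3 <= d1 + d2.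
Proof.
  intros Hu Hv Hw H1 H2 H3.
  set (xu := exist _ u Hu : l2). set (xv := exist _ v Hv : l2). set (xw := exist _ w Hw : l2).
  destruct (Hfin (xu :: xv :: xw :: nil)) as [g Hg].
  assert (E1 := Hg xu xv d1 ltac:(simpl; auto) ltac:(simpl; auto) H1).
  assert (E2 := Hg xv xw d2 ltac:(simpl; auto) ltac:(simpl; auto) H2).
  assert (E3 := Hg xu xw d3 ltac:(simpl; auto) ltac:(simpl; auto) H3).
  pose proof (vnorm_triangle X (vsub X (g xv) (g xw)) (vsub X (g xu) (g xv))) as T.
  rewrite vsub_add in T. lra.
Qed.
End Tri.

Definition iota (l : list Z) (i : nat) : R :=
  match i with O => INR (length l) | S j => IZR (nth j l 0%Z) end.

Lemma iota_supp l i : (length l < i)%nat -> iota l i = 0.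
Proof.
  intros H. destruct i; [lia|]. simpl. rewrite nth_overflow by lia. reflexivity.
Qed.

Lemma sqs_iota l : sqs (iota l).
Proof. apply (sqs_fin _ (length l)). apply iota_supp. Qed.

Definition ldist (a b : list Z) : R :=
  sqrt (sum_f_R0 (fun i => (iota a i - iota b i)^2) (length a + length b)).

Lemma ldist_spec a b : sdist (iota a) (iota b) (ldist a b).
Proof.
  apply sdist_fin. intros i Hi. rewrite !iota_supp by lia. reflexivity.
Qed.

Lemma ldist_nonneg a b : 0 <= ldist a b.
Proof. apply sqrt_pos. Qed.

Lemma iota_inj a b : (forall i, iota a i = iota b i) -> a = b.
Proof.
  intros H. assert (HL : length a = length b).
  { specialize (H O). simpl in H. apply INR_eq; auto. }
  apply (nth_ext a b 0%Z 0%Z HL). intros n _. specialize (H (S n)). simpl in H.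
  apply eq_IZR; auto.
Qed.

Lemma ldist_zero a b : ldist a b = 0 -> a = b.
Proof.
  intros H. apply iota_inj. apply sdist_zero. rewrite <- H. apply ldist_spec.
Qed.

Lemma ldist_refl a : ldist a a = 0.
Proof. eapply sdist_uniq; [apply ldist_spec|apply sdist_refl]. Qed.

Lemma ldist_sym a b : ldist a b = ldist b a.
Proof. eapply sdist_uniq; [apply ldist_spec|apply sdist_sym, ldist_spec]. Qed.

Fixpoint lists_len (n : nat) (E : list Z) : list (list Z) :=
  match n with
  | O => nil :: nil
  | S n => flat_map (fun l => map (fun e => e :: l) E) (lists_len n E)
  end.

Lemma lists_len_in E l : (forall z, In z l -> In z E) -> In l (lists_len (length l) E).
Proof.
  induction l as [|e l IH]; intros H; [simpl; auto|].
  change (length (e :: l)) with (S (length l)). cbn [lists_len].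
  apply in_flat_map_Exists, Exists_exists. exists l. split.
  - apply IH. intros; apply H; simpl; auto.
  - apply (in_map (fun e0 => e0 :: l)). apply H; simpl; auto.
Qed.

Definition zrange (B : nat) : list Z :=
  map (fun n => Z.of_nat n - Z.of_nat B)%Z (seq 0 (2*B+1)).

Lemma zrange_in B z : (Z.abs z <= Z.of_nat B)%Z -> In z (zrange B).
Proof.
  intros H. unfold zrange. apply in_map_iff. exists (Z.to_nat (z + Z.of_nat B)).
  split.
  - rewrite Z2Nat.id by lia. lia.
  - apply in_seq. lia.
Qed.

Definition ball_list (B : nat) : list (list Z) :=
  flat_map (fun n => lists_len n (zrange B)) (seq 0 (S B)).

Fixpoint absum (l : list Z) : Z :=
  match l with nil => 0%Z | z :: l => (Z.abs z + absum l)%Z end.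

Lemma absum_nonneg l : (0 <= absum l)%Z.
Proof. induction l; simpl; lia. Qed.

Lemma nth_abs_le l j : (Z.abs (nth j l 0%Z) <= absum l)%Z.
Proof.
  revert j; induction l as [|z l IH]; intros j; destruct j as [|j]; simpl.
  all: try (pose proof (absum_nonneg l); lia).
  all: try (specialize (IH j); pose proof (Z.abs_nonneg z); lia).
  all: apply Z.le_refl.
Qed.

Lemma abs_le_inv a r : Rabs a <= r -> -r <= a <= r.
Proof. unfold Rabs; destruct Rcase_abs; lra. Qed.

Lemma nat_above (t : R) : exists B : nat, t <= INR B.
Proof.
  destruct (archimed t) as [H1 H2].
  destruct (Z_lt_le_dec (up t) 0) as [Hn|Hp].
  - exists O. simpl. apply IZR_lt in Hn. lra.
  - exists (Z.to_nat (up t)). rewrite INR_IZR_INZ, Z2Nat.id by auto. lra.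
Qed.

Lemma ldist_locfin (x : list Z) (r : R) :
  exists s, forall y, ldist x y <= r -> In y s.
Proof.
  destruct (nat_above (r + INR (length x) + IZR (absum x))) as [B HB].
  pose proof (pos_INR (length x)). pose proof (IZR_le _ _ (absum_nonneg x)).
  exists (ball_list B). intros y Hy.
  pose proof (ldist_nonneg x y) as Hd.
  assert (Hc : forall i, Rabs (iota x i - iota y i) <= r).
  { intros i. pose proof (sdist_coord _ _ _ i (ldist_spec x y)) as H1.
    apply Rabs_le; split; nra. }
  assert (HL : (length y <= B)%nat).
  { apply INR_le. specialize (Hc O). simpl in Hc. apply abs_le_inv in Hc. lra. }
  assert (HE : forall z, In z y -> In z (zrange B)).
  { intros z Hz. apply zrange_in. destruct (In_nth y z 0%Z Hz) as [j [Hj Hjz]].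
    specialize (Hc (S j)). simpl in Hc. rewrite Hjz in Hc.
    pose proof (IZR_le _ _ (nth_abs_le x j)) as Hn. rewrite abs_IZR in Hn.
    apply le_IZR. rewrite abs_IZR, <- INR_IZR_INZ.
    pose proof (Rabs_triang_inv (IZR (nth j x 0%Z)) (IZR z)).
    rewrite Rabs_minus_sym in Hc.
    pose proof (Rabs_triang (IZR z - IZR (nth j x 0%Z)) (IZR (nth j x 0%Z))) as T.
    replace (IZR z - IZR (nth j x 0%Z) + IZR (nth j x 0%Z)) with (IZR z) in T by ring.
    lra. }
  unfold ball_list. apply in_flat_map_Exists, Exists_exists. exists (length y). split.
  - apply in_seq. lia.
  - apply lists_len_in; auto.
Qed.

Lemma nth_mk (g : nat -> Z) n i :
  nth i (map g (seq 0 n)) 0%Z = if (i <? n)%nat then g i else 0%Z.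
Proof.
  destruct (Nat.ltb_spec i n).
  - rewrite nth_indep with (d' := g 0%nat) by (rewrite length_map, length_seq; auto).
    rewrite map_nth, seq_nth; auto.
  - apply nth_overflow. rewrite length_map, length_seq; auto.
Qed.

Lemma iota_mk g n i : iota (map g (seq 0 n)) i =
  match i with O => INR n | S j => if (j <? n)%nat then IZR (g j) else 0 end.
Proof.
  destruct i as [|j]; simpl.
  - rewrite length_map, length_seq; auto.
  - rewrite nth_mk. destruct (j <? n)%nat; auto.
Qed.

Lemma iota_nil i : iota nil i = 0.
Proof. destruct i as [|j]; simpl; auto. destruct j; reflexivity. Qed.

Definition dbl (l : list Z) : list Z :=
  map (fun i => (2 * nth i l 0)%Z) (seq 0 (2 * length l)).

Lemma iota_dbl l i : iota (dbl l) i = 2 * iota l i.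
Proof.
  unfold dbl. rewrite iota_mk. destruct i as [|j].
  - rewrite mult_INR. simpl. ring.
  - destruct (Nat.ltb_spec j (2 * length l)).
    + rewrite mult_IZR. reflexivity.
    + simpl. rewrite nth_overflow by lia. ring.
Qed.

Definition dblk (m : nat) (l : list Z) : list Z := Nat.iter m dbl l.

Lemma iota_dblk m l i : iota (dblk m l) i = 2^m * iota l i.
Proof.
  induction m.
  - simpl. ring.
  - change (dblk (S m) l) with (dbl (dblk m l)). rewrite iota_dbl, IHm. simpl. ring.
Qed.

Definition p2 (k : nat) : nat := (2 ^ k)%nat.

Lemma INR_p2 k : INR (p2 k) = 2^k.
Proof. unfold p2. rewrite pow_INR. simpl. replace (1+1) with 2 by ring. reflexivity. Qed.

Lemma k_lt_p2 k : (k < p2 k)%nat.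
Proof. apply Nat.pow_gt_lin_r. lia. Qed.

Lemma Sk_le_p2 k : INR (S k) <= 2^k.
Proof. rewrite <- INR_p2. apply le_INR. pose proof (k_lt_p2 k). lia. Qed.

Definition Pk (k : nat) (x : nat -> R) : list Z :=
  map (fun i => if (i <? k)%nat then Int_part (2^k * x i) else 0%Z) (seq 0 (p2 k)).

Definition Qk (k : nat) : list Z := map (fun _ => 0%Z) (seq 0 (p2 k)).

Lemma iota_Pk k x i : iota (Pk k x) i =
  match i with O => 2^k | S j => if (j <? k)%nat then IZR (Int_part (2^k * x j)) else 0 end.
Proof.
  unfold Pk. rewrite iota_mk. destruct i as [|j]; [apply INR_p2|].
  pose proof (k_lt_p2 k).
  destruct (Nat.ltb_spec j k); destruct (Nat.ltb_spec j (p2 k)); auto; lia.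
Qed.

Lemma iota_Qk k i : iota (Qk k) i = match i with O => 2^k | S _ => 0 end.
Proof.
  unfold Qk. rewrite iota_mk. destruct i as [|j]; [apply INR_p2|].
  destruct (j <? p2 k)%nat; auto.
Qed.

Lemma Qk_dblk k m : dblk m (Qk k) = Qk (m + k).
Proof.
  apply iota_inj. intros i. rewrite iota_dblk, !iota_Qk. destruct i.
  - rewrite pow_add. ring.
  - ring.
Qed.

Definition pk (k : nat) (x : nat -> R) (i : nat) : R := / 2^k * iota (Pk k x) i.
Definition xplus (x : nat -> R) : nat -> R := shift 1 x.
Definition tk (k : nat) (x : nat -> R) (i : nat) : R :=
  if (i <=? k)%nat then shift 1 x i else 0.

Lemma p2pos k : 0 < 2^k.
Proof. apply pow_lt. lra. Qed.

Lemma sqs_pk k x : sqs (pk k x).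
Proof.
  apply (sqs_fin _ k). intros i Hi. unfold pk. rewrite iota_Pk. destruct i; [lia|].
  destruct (Nat.ltb_spec i k); [lia|]. ring.
Qed.

Lemma sqs_xplus x : sqs x -> sqs (xplus x).
Proof.
  intros [s Hs]. exists (1 + s). apply (isum_ext (shift 1 (fun n => x n ^ 2))).
  - intros [|n]; simpl; ring.
  - apply isum_shift; auto.
Qed.

Lemma sqs_tk k x : sqs (tk k x).
Proof.
  apply (sqs_fin _ k). intros i Hi. unfold tk. destruct (Nat.leb_spec i k); [lia|auto].
Qed.

Lemma pk_tk k x : exists D, sdist (pk k x) (tk k x) D /\ D <= sqrt (/ 2^k).
Proof.
  pose proof (p2pos k) as P.
  exists (sqrt (sum_f_R0 (fun i => (pk k x i - tk k x i)^2) k)). split.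
  - apply sdist_fin. intros i Hi. unfold pk, tk. rewrite iota_Pk.
    destruct (Nat.leb_spec i k); [lia|]. destruct i; [lia|].
    destruct (Nat.ltb_spec i k); [lia|]. ring.
  - apply sqrt_le_1_alt.
    apply Rle_trans with (sum_f_R0 (fun _ => (/2^k)^2) k).
    + apply sum_Rle. intros i Hi. unfold pk, tk. rewrite iota_Pk.
      destruct (Nat.leb_spec i k); [|lia]. destruct i as [|j].
      * simpl shift. rewrite Rinv_l by lra. pose proof (pow2_nonneg (/2^k)). 
        replace ((1-1)^2) with 0 by ring. auto.
      * destruct (Nat.ltb_spec j k); [|lia]. simpl shift.
        destruct (base_Int_part (2^k * x j)) as [B1 B2].
        set (t := IZR (Int_part (2 ^ k * x j)) - 2^k * x j).
        replace (/ 2 ^ k * IZR (Int_part (2 ^ k * x j)) - x j) with (/2^k * t)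
          by (unfold t; field; lra).
        assert (-1 < t <= 0) by (unfold t; lra).
        assert (t^2 <= 1) by nra.
        replace ((/2^k * t)^2) with ((/2^k)^2 * t^2) by ring.
        pose proof (pow2_nonneg (/2^k)). nra.
    + rewrite sum_cte. pose proof (Sk_le_p2 k).
      replace ((/2^k)^2 * INR (S k)) with (/2^k * (INR (S k) / 2^k)) by (field; lra).
      assert (INR (S k) / 2^k <= 1).
      { apply Rmult_le_reg_r with (2^k); auto. unfold Rdiv.
        rewrite Rmult_assoc, Rinv_l by lra. lra. }
      pose proof (Rinv_0_lt_compat _ P).
      pose proof (pos_INR (S k)).
      assert (0 <= INR (S k) / 2^k) by (unfold Rdiv; apply Rmult_le_pos; lra).
      nra.
Qed.

Lemma tk_xplus k x s : infinite_sum (fun n => x n ^ 2) s ->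
  sdist (tk k x) (xplus x) (sqrt (1 + s - sum_f_R0 (fun i => (shift 1 x i)^2) k)).
Proof.
  intros Hs.
  assert (H1 : infinite_sum (fun i => (shift 1 x i)^2) (1 + s)).
  { apply (isum_ext (shift 1 (fun n => x n ^ 2))).
    - intros [|n]; simpl; ring.
    - apply isum_shift; auto. }
  pose proof (isum_mask _ _ k H1) as H2.
  assert (0 <= 1 + s - sum_f_R0 (fun i => shift 1 x i ^ 2) k).
  { eapply isum_nonneg; [|exact H2]. intros i. unfold mask. destruct (i <=? k)%nat; [lra|apply pow2_nonneg]. }
  split; [apply sqrt_pos|]. rewrite pow2_sqrt by auto.
  apply (isum_ext (mask k (fun i => shift 1 x i ^ 2))); auto.
  intros i. unfold mask, tk, xplus. destruct (i <=? k)%nat; ring.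
Qed.

Lemma p2inv_small d : 0 < d -> exists K, forall k, (K <= k)%nat -> / 2^k < d.
Proof.
  intros Hd. destruct (nat_above (/ d)) as [B HB]. exists B. intros k Hk.
  pose proof (Sk_le_p2 k). pose proof (le_INR _ _ Hk). rewrite S_INR in H.
  assert (/ d < 2^k) by lra.
  pose proof (Rinv_0_lt_compat _ Hd).
  rewrite <- (Rinv_inv d). apply Rinv_lt_contravar; auto. apply Rmult_lt_0_compat; auto. lra.
Qed.

Lemma sqrt_lt_sq a b : 0 <= a -> 0 < b -> a < b^2 -> sqrt a < b.
Proof.
  intros Ha Hb H. rewrite <- (sqrt_pow2 b) by lra. apply sqrt_lt_1_alt. lra.
Qed.

Lemma ek_small x : sqs x -> forall eps, 0 < eps ->
  exists K, forall k, (K <= k)%nat -> forall X : Banach, l2_finitely_isometric X ->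
    forall D, sdist (pk k x) (xplus x) D -> D < eps.
Proof.
  intros [s Hs] eps He.
  assert (H1 : infinite_sum (fun i => (shift 1 x i)^2) (1 + s)).
  { apply (isum_ext (shift 1 (fun n => x n ^ 2))).
    - intros [|n]; simpl; ring.
    - apply isum_shift; auto. }
  destruct (H1 ((eps/2)^2)) as [K1 HK1]. { nra. }
  destruct (p2inv_small ((eps/2)^2)) as [K2 HK2]. { nra. }
  exists (Nat.max K1 K2). intros k Hk X Hfin D HD.
  destruct (pk_tk k x) as [D1 [HD1 HD1b]].
  pose proof (tk_xplus k x s Hs) as HD2.
  assert (Hsx : sqs x) by (exists s; auto).
  pose proof (sdist_tri X Hfin _ _ _ _ _ _ (sqs_pk k x) (sqs_tk k x) (sqs_xplus x Hsx) HD1 HD2 HD).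
  assert (D1 < eps / 2).
  { eapply Rle_lt_trans; [exact HD1b|]. apply sqrt_lt_sq; [left; apply Rinv_0_lt_compat, p2pos| lra|].
    apply HK2. lia. }
  set (V := 1 + s - sum_f_R0 (fun i => shift 1 x i ^ 2) k) in *.
  assert (sqrt V < eps / 2).
  { specialize (HK1 k ltac:(lia)). unfold R_dist in HK1.
    assert (0 <= V).
    { destruct HD2 as [_ HH]. eapply isum_nonneg in HH.
      2:{ intros; apply pow2_nonneg. } rewrite pow2_sqrt in HH; auto.
      unfold V. pose proof (psum_le (fun i => shift 1 x i ^ 2) (1+s) k (fun i => pow2_nonneg _) H1). lra. }
    apply sqrt_lt_sq; auto; [lra|]. unfold V. apply Rabs_def2 in HK1. lra. }
  lra.
Qed.

Section Main.
Variable X : Banach.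
Hypothesis Hsc : strictly_convex X.
Hypothesis Hfin : l2_finitely_isometric X.
Variable f : list Z -> X.
Variable r : R.
Hypothesis Hr : 0 < r.
Hypothesis Hf : forall a b, vnorm X (vsub X (f a) (f b)) = r * ldist a b.

Definition G l := vsub X (f l) (f nil).

Lemma G_dbl l : G (dbl l) = vscal X 2 (G l).
Proof.
  set (n := ldist nil l).
  assert (E1 : ldist l (dbl l) = n).
  { eapply sdist_uniq; [apply ldist_spec|].
    apply (sdist_ext (iota nil) (iota l)); [apply ldist_spec|].
    intros i. rewrite iota_dbl, iota_nil. ring. }
  assert (E2 : ldist nil (dbl l) = 2 * n).
  { eapply sdist_uniq; [apply ldist_spec|].
    apply (sdist_scale (iota nil) (iota l)); [apply ldist_spec| lra |].
    intros i; rewrite iota_dbl, iota_nil; ring. }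
  pose proof (ldist_nonneg nil l).
  assert (C := collinear X Hsc (f nil) (f l) (f (dbl l)) (1/2) (2 * r * n) ltac:(lra)).
  rewrite !Hf, (ldist_sym l nil), (ldist_sym (dbl l) l), (ldist_sym (dbl l) nil), E1, E2 in C.
  fold n in C.
  specialize (C ltac:(field) ltac:(field) ltac:(ring)).
  unfold G. rewrite C, vscal_assoc. replace (2 * (1/2)) with 1 by field. symmetry; apply vscal_1.
Qed.

Lemma G_dblk m l : G (dblk m l) = vscal X (2^m) (G l).
Proof.
  induction m.
  - simpl. symmetry; apply vscal_1.
  - change (dblk (S m) l) with (dbl (dblk m l)). rewrite G_dbl, IHm, vscal_assoc. reflexivity.
Qed.

Lemma fsub_dblk m a b :
  vsub X (f (dblk m a)) (f (dblk m b)) = vscal X (2^m) (vsub X (f a) (f b)).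
Proof.
  rewrite <- (vsub_common X (f (dblk m a)) (f (dblk m b)) (f nil)).
  change (vsub X (G (dblk m a)) (G (dblk m b)) = vscal X (2^m) (vsub X (f a) (f b))).
  rewrite !G_dblk, <- vscal_sub. unfold G. rewrite vsub_common. reflexivity.
Qed.

Lemma dist_scaled (c : R) a b (u v : nat -> R) D : 0 <= c ->
  (forall i, u i = c * iota a i) -> (forall i, v i = c * iota b i) -> sdist u v D ->
  vnorm X (vscal X c (vsub X (f a) (f b))) = r * D.
Proof.
  intros Hc Hu Hv HD. rewrite vnorm_scal, Rabs_right, Hf by lra.
  assert (sdist u v (c * ldist a b)).
  { apply (sdist_scale (iota a) (iota b)); auto; [apply ldist_spec|].
    intros i. rewrite Hu, Hv. ring. }
  rewrite (sdist_uniq _ _ _ _ HD H). ring.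
Qed.

Definition Tk (k : nat) (x : nat -> R) : X :=
  vscal X (/ 2^k) (vsub X (f (Pk k x)) (f (Qk k))).

Lemma Tk_dist k x y D : sdist (pk k x) (pk k y) D ->
  vnorm X (vsub X (Tk k x) (Tk k y)) = r * D.
Proof.
  intros HD. unfold Tk. rewrite <- vscal_sub, vsub_common.
  apply (dist_scaled _ _ _ (pk k x) (pk k y)); auto.
  left; apply Rinv_0_lt_compat, p2pos.
Qed.

Lemma Tk_cauchy k m x D : sdist (pk (m + k) x) (pk k x) D ->
  vnorm X (vsub X (Tk (m + k) x) (Tk k x)) = r * D.
Proof.
  intros HD. pose proof (p2pos k). pose proof (p2pos m).
  assert (E : Tk k x = vscal X (/ 2^(m+k)) (vsub X (f (dblk m (Pk k x))) (f (Qk (m+k))))).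
  { rewrite <- Qk_dblk, fsub_dblk, vscal_assoc. unfold Tk. f_equal. rewrite pow_add. field. lra. }
  rewrite E. unfold Tk at 1. rewrite <- vscal_sub, vsub_common.
  apply (dist_scaled _ _ _ (pk (m + k) x) (pk k x)); auto.
  - left; apply Rinv_0_lt_compat, p2pos.
  - intros i. unfold pk. rewrite iota_dblk, pow_add. field. lra.
Qed.

Lemma Tk_cauchy_bound x (Hx : sqs x) : forall eps, 0 < eps ->
  exists N, forall m n, (N <= m)%nat -> (N <= n)%nat ->
    vnorm X (vsub X (Tk m x) (Tk n x)) < eps.
Proof.
  intros eps He.
  destruct (ek_small x Hx (eps / (2 * r))) as [K HK].
  { apply Rdiv_lt_0_compat; lra. }
  exists K.
  assert (Aux : forall m n, (K <= n)%nat -> (n <= m)%nat -> vnorm X (vsub X (Tk m x) (Tk n x)) < eps).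
  { intros m n Hn Hm. replace m with ((m - n) + n)%nat by lia.
    destruct (sdist_ex _ _ (sqs_pk ((m - n) + n) x) (sqs_pk n x)) as [D HD].
    rewrite (Tk_cauchy _ _ _ _ HD).
    destruct (sdist_ex _ _ (sqs_pk ((m - n) + n) x) (sqs_xplus x Hx)) as [D1 HD1].
    destruct (sdist_ex _ _ (sqs_pk n x) (sqs_xplus x Hx)) as [D2 HD2].
    pose proof (sdist_tri X Hfin _ _ _ _ _ _ (sqs_pk _ x) (sqs_xplus x Hx) (sqs_pk n x)
                  HD1 (sdist_sym _ _ _ HD2) HD).
    pose proof (HK ((m - n) + n)%nat ltac:(lia) X Hfin D1 HD1).
    pose proof (HK n ltac:(lia) X Hfin D2 HD2).
    apply Rle_lt_trans with (r * (D1 + D2)); [apply Rmult_le_compat_l; lra|].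
    replace eps with (r * (eps / (2 * r) + eps / (2 * r))) by (field; lra).
    apply Rmult_lt_compat_l; lra. }
  intros m n Hm Hn. destruct (Nat.le_ge_cases n m).
  - apply Aux; auto.
  - rewrite vnorm_sub_sym. apply Aux; auto.
Qed.

Definition Tlim (x : l2) : X :=
  proj1_sig (constructive_indefinite_description _
    (vcomplete X (fun n => Tk n (proj1_sig x)) (Tk_cauchy_bound (proj1_sig x) (proj2_sig x)))).

Lemma Tlim_spec (x : l2) : forall eps, 0 < eps -> exists N, forall n, (N <= n)%nat ->
  vnorm X (vsub X (Tk n (proj1_sig x)) (Tlim x)) < eps.
Proof.
  unfold Tlim. destruct (constructive_indefinite_description _ _) as [l Hl]. simpl. exact Hl.
Qed.

Lemma vtri3 (a b c : X) : vnorm X (vsub X a c) <= vnorm X (vsub X a b) + vnorm X (vsub X b c).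
Proof.
  pose proof (vnorm_triangle X (vsub X b c) (vsub X a b)). rewrite vsub_add in H. lra.
Qed.

Lemma eq_of_close a b : (forall eps, 0 < eps -> Rabs (a - b) < eps) -> a = b.
Proof.
  intros H. destruct (Req_dec a b) as [|NE]; auto. exfalso.
  assert (0 < Rabs (a - b)) by (apply Rabs_pos_lt; lra).
  specialize (H _ H0). lra.
Qed.

Lemma Tlim_iso (x y : l2) d : l2_dist_is x y d ->
  vnorm X (vsub X (Tlim x) (Tlim y)) = r * d.
Proof.
  intros Hd. destruct x as [x Hx]. destruct y as [y Hy]. unfold l2_dist_is in Hd. cbn [proj1_sig] in Hd.
  set (tx := Tlim (exist _ x Hx)) in *. set (ty := Tlim (exist _ y Hy)) in *.
  assert (Hdp : sdist (xplus x) (xplus y) d).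
  { destruct Hd as [Hd0 Hd1]. split; auto.
    replace (d^2) with (0 + d^2) by ring.
    apply (isum_ext (shift 0 (fun n => (x n - y n)^2))).
    - intros [|n]; simpl; ring.
    - apply isum_shift; auto. }
  apply eq_of_close. intros eps He.
  destruct (Tlim_spec (exist _ x Hx) (eps / 4)) as [N1 HN1]; [lra|].
  destruct (Tlim_spec (exist _ y Hy) (eps / 4)) as [N2 HN2]; [lra|].
  destruct (ek_small x Hx (eps / (4 * r))) as [K1 HK1]; [apply Rdiv_lt_0_compat; lra|].
  destruct (ek_small y Hy (eps / (4 * r))) as [K2 HK2]; [apply Rdiv_lt_0_compat; lra|].
  set (k := Nat.max (Nat.max N1 N2) (Nat.max K1 K2)).
  specialize (HN1 k ltac:(lia)). specialize (HN2 k ltac:(lia)). cbn [proj1_sig] in HN1, HN2.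
  fold tx in HN1. fold ty in HN2.
  destruct (sdist_ex _ _ (sqs_pk k x) (sqs_pk k y)) as [Dk HDk].
  destruct (sdist_ex _ _ (sqs_pk k x) (sqs_xplus x Hx)) as [ex Hex].
  destruct (sdist_ex _ _ (sqs_pk k y) (sqs_xplus y Hy)) as [ey Hey].
  destruct (sdist_ex _ _ (sqs_pk k x) (sqs_xplus y Hy)) as [m Hm].
  pose proof (HK1 k ltac:(lia) X Hfin ex Hex).
  pose proof (HK2 k ltac:(lia) X Hfin ey Hey).
  assert (Sx := sqs_pk k x). assert (Sy := sqs_pk k y).
  assert (Spx := sqs_xplus x Hx). assert (Spy := sqs_xplus y Hy).
  (* Dk <= m + ey, m <= ex + d *)
  pose proof (sdist_tri X Hfin _ _ _ _ _ _ Sx Spy Sy Hm (sdist_sym _ _ _ Hey) HDk).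
  pose proof (sdist_tri X Hfin _ _ _ _ _ _ Sx Spx Spy Hex Hdp Hm).
  (* d <= ex + m, m <= Dk + ey *)
  pose proof (sdist_tri X Hfin _ _ _ _ _ _ Spx Sx Spy (sdist_sym _ _ _ Hex) Hm Hdp).
  pose proof (sdist_tri X Hfin _ _ _ _ _ _ Sx Sy Spy HDk Hey Hm).
  pose proof (Tk_dist k x y Dk HDk) as HT.
  pose proof (vtri3 tx (Tk k x) ty). pose proof (vtri3 (Tk k x) (Tk k y) ty).
  pose proof (vtri3 (Tk k x) tx (Tk k y)). pose proof (vtri3 tx ty (Tk k y)).
  pose proof (vnorm_sub_sym X tx (Tk k x)). pose proof (vnorm_sub_sym X ty (Tk k y)).
  assert (r * ex < eps / 4).
  { replace (eps / 4) with (r * (eps / (4 * r))) by (field; lra). apply Rmult_lt_compat_l; lra. }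
  assert (r * ey < eps / 4).
  { replace (eps / 4) with (r * (eps / (4 * r))) by (field; lra). apply Rmult_lt_compat_l; lra. }
  assert (r * Dk <= r * (ex + d + ey)) by (apply Rmult_le_compat_l; lra).
  assert (r * d <= r * (ex + Dk + ey)) by (apply Rmult_le_compat_l; lra).
  apply Rabs_def1; lra.
Qed.

End Main.

Definition l2zero : l2 := exist _ (fun _ => 0) (sqs_fin (fun _ => 0) 0 (fun _ _ => eq_refl)).

Lemma sqs_scal c x : sqs x -> sqs (fun n => c * x n).
Proof.
  intros [s Hs]. exists (c^2 * s). apply (isum_ext (fun n => c^2 * x n ^ 2)).
  - intros; ring.
  - apply isum_scal; auto.
Qed.

Definition l2scal (c : R) (x : l2) : l2 :=
  exist _ (fun n => c * proj1_sig x n) (sqs_scal c _ (proj2_sig x)).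

Lemma vsub_0r (X : Banach) (a : X) : vsub X a (vzero X) = a.
Proof. unfold vsub. rewrite vopp_scal, vscal_0r, vadd_0. reflexivity. Qed.

Lemma vmid_alg (X : Banach) (a b c : X) :
  vsub X a b = vscal X (1/2) (vsub X c b) -> a = vscal X (1/2) (vadd X b c).
Proof.
  intros H. assert (a = vadd X (vsub X a b) b).
  { unfold vsub. rewrite <- vadd_assoc, (vadd_comm X (vopp X b)), vadd_opp, vadd_0. reflexivity. }
  rewrite H0, H. unfold vsub. rewrite vopp_scal, !vscal_addV, vscal_assoc.
  rewrite <- vadd_assoc.
  assert (E : vadd X (vscal X (1 / 2 * -1) b) b = vscal X (1/2) b).
  { rewrite <- (vscal_1 X b) at 2. rewrite <- vscal_addR. f_equal. field. }
  rewrite E, vadd_comm. reflexivity.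
Qed.

Section Lin.
Variable X : Banach.
Hypothesis Hsc : strictly_convex X.
Variable T : l2 -> X.
Variable r : R.
Hypothesis Hr : 0 < r.
Hypothesis HT : forall x y d, l2_dist_is x y d -> vnorm X (vsub X (T x) (T y)) = r * d.
Hypothesis T0 : T l2zero = vzero X.

Lemma l2_dist_ex (x y : l2) : exists d, l2_dist_is x y d.
Proof. apply sdist_ex; [apply (proj2_sig x)|apply (proj2_sig y)]. Qed.

Lemma T_ext (x y : l2) : (forall n, proj1_sig x n = proj1_sig y n) -> T x = T y.
Proof.
  intros E. apply (vnorm_eq0_iff X). rewrite (HT x y 0); [ring|].
  apply (sdist_ext (proj1_sig y) (proj1_sig y)); [apply sdist_refl|]. intros; rewrite E; ring.
Qed.

Lemma T_mid (x y m : l2) : (forall n, proj1_sig m n = (proj1_sig x n + proj1_sig y n) / 2) ->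
  T m = vscal X (1/2) (vadd X (T x) (T y)).
Proof.
  intros Hm. destruct (l2_dist_ex x y) as [d Hd].
  assert (H1 : l2_dist_is m x (1/2 * d)).
  { apply (sdist_scale (proj1_sig x) (proj1_sig y)); auto; [lra|]. intros i; rewrite Hm; field. }
  assert (H2 : l2_dist_is y m (1/2 * d)).
  { apply (sdist_scale (proj1_sig x) (proj1_sig y)); auto; [lra|]. intros i; rewrite Hm; field. }
  apply vmid_alg. apply (collinear X Hsc _ _ _ (1/2) (r * d)); [lra| | |].
  - rewrite (HT _ _ _ H1). field.
  - rewrite (HT _ _ _ H2). field.
  - rewrite (HT _ _ _ (sdist_sym _ _ _ Hd)). ring.
Qed.

Lemma T_neg (x w : l2) : (forall n, proj1_sig w n = - proj1_sig x n) -> T w = vopp X (T x).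
Proof.
  intros Hw. assert (E := T_mid x w l2zero). rewrite T0 in E.
  assert (Hz : forall n, proj1_sig l2zero n = (proj1_sig x n + proj1_sig w n) / 2).
  { intros n. rewrite Hw. simpl. field. }
  specialize (E Hz).
  apply (f_equal (vscal X 2)) in E. rewrite vscal_0r, vscal_assoc in E.
  replace (2 * (1/2)) with 1 in E by field. rewrite vscal_1 in E.
  apply (vadd_cancel_r X _ _ (T x)). rewrite (vadd_comm X (vopp X (T x))), vadd_opp.
  rewrite vadd_comm. auto.
Qed.

Lemma T_hom01 (x w : l2) c : 0 <= c <= 1 -> (forall n, proj1_sig w n = c * proj1_sig x n) ->
  T w = vscal X c (T x).
Proof.
  intros Hc Hw. destruct (l2_dist_ex l2zero x) as [d Hd].
  assert (H1 : l2_dist_is w l2zero (c * d)).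
  { apply sdist_sym. apply (sdist_scale (proj1_sig l2zero) (proj1_sig x)); auto; [lra|].
    intros i; rewrite Hw; simpl; ring. }
  assert (H2 : l2_dist_is x w ((1 - c) * d)).
  { apply (sdist_scale (proj1_sig x) (proj1_sig l2zero)); [apply sdist_sym; auto| lra|].
    intros i; rewrite Hw; simpl; ring. }
  pose proof (collinear X Hsc (T l2zero) (T w) (T x) c (r * d) Hc) as C.
  rewrite (HT _ _ _ H1), (HT _ _ _ H2), (HT _ _ _ (sdist_sym _ _ _ Hd)), T0, !vsub_0r in C.
  apply C; ring.
Qed.

Lemma T_homnn (x w : l2) c : 0 <= c -> (forall n, proj1_sig w n = c * proj1_sig x n) ->
  T w = vscal X c (T x).
Proof.
  intros Hc Hw. destruct (Rle_dec c 1) as [Hc1|Hc1]; [apply T_hom01; auto; lra|].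
  assert (E : T x = vscal X (/c) (T w)).
  { apply T_hom01. split; [left; apply Rinv_0_lt_compat; lra|].
    rewrite <- Rinv_1. apply Rinv_le_contravar; lra.
    intros n. rewrite Hw. field. lra. }
  rewrite E, vscal_assoc, Rinv_r, vscal_1 by lra. reflexivity.
Qed.

Lemma T_hom (x w : l2) c : (forall n, proj1_sig w n = c * proj1_sig x n) ->
  T w = vscal X c (T x).
Proof.
  intros Hw. destruct (Rle_dec 0 c); [apply T_homnn; auto|].
  set (y := l2scal (-1) x).
  assert (Ey : T y = vopp X (T x)) by (apply T_neg; intros; unfold y, l2scal; cbn [proj1_sig]; ring).
  rewrite (T_homnn y w (-c)); [|lra|intros; rewrite Hw; unfold y, l2scal; cbn [proj1_sig]; ring].
  rewrite Ey, vopp_scal, vscal_assoc. f_equal. ring.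
Qed.

Lemma T_lin (x y z : l2) a b :
  (forall n, proj1_sig z n = a * proj1_sig x n + b * proj1_sig y n) ->
  T z = vadd X (vscal X a (T x)) (vscal X b (T y)).
Proof.
  intros Hz.
  assert (Hm : forall n, proj1_sig (l2scal (1/2) z) n =
     (proj1_sig (l2scal a x) n + proj1_sig (l2scal b y) n) / 2).
  { intros n. unfold l2scal; cbn [proj1_sig]. rewrite Hz. field. }
  assert (E := T_mid (l2scal a x) (l2scal b y) (l2scal (1/2) z) Hm).
  rewrite (T_hom z (l2scal (1/2) z) (1/2)) in E by (intros; reflexivity).
  rewrite (T_hom x (l2scal a x) a) in E by (intros; reflexivity).
  rewrite (T_hom y (l2scal b y) b) in E by (intros; reflexivity).
  apply (f_equal (vscal X 2)) in E. rewrite !vscal_assoc in E.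
  replace (2 * (1/2)) with 1 in E by field. rewrite !vscal_1 in E. exact E.
Qed.

Lemma T_embeds : l2_isomorphic_embeds X.
Proof.
  exists T, r, r. split; [auto|]. split.
  - intros x y z a b Hz. apply T_lin; auto.
  - intros x d [Hd0 Hd]. assert (l2_dist_is x l2zero d).
    { split; auto. apply (isum_ext (fun n => proj1_sig x n ^ 2)); auto. intros; simpl; ring. }
    rewrite <- (vsub_0r X (T x)), <- T0, (HT _ _ _ H). lra.
Qed.
End Lin.

Definition Amet (X : Banach) (Hfin : l2_finitely_isometric X) : MetricSpace.
Proof.
  refine {| mcar := list Z; mdist := ldist |}.
  - intros x y. split; [apply ldist_zero|intros ->; apply ldist_refl].
  - apply ldist_sym.
  - intros x y z. apply (sdist_tri X Hfin (iota x) (iota y) (iota z)); try apply sqs_iota; apply ldist_spec.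
Defined.

Definition toL2 (l : list Z) : l2 := exist _ (iota l) (sqs_iota l).

Theorem theorem1p7 (X : Banach)
  (Hsc : strictly_convex X)
  (Hfin : l2_finitely_isometric X)
  (Hnot : ~ l2_isomorphic_embeds X) :
  exists (A : MetricSpace) (C : R),
    1 <= C /\ locally_finite A /\
    (forall s : list A, bilip_embeds_le A X (fun x => In x s) C) /\
    ~ bilip_embeds_le A X (fun _ => True) C.
Proof.
  exists (Amet X Hfin), 1. split; [lra|]. split; [|split].
  - intros x r. apply ldist_locfin.
  - intros s. destruct (Hfin (map toL2 s)) as [g Hg].
    exists (fun a => g (toL2 a)), 1. split; [lra|]. intros x y Hx Hy.
    rewrite (Hg (toL2 x) (toL2 y) (ldist x y)); [| apply in_map; auto | apply in_map; auto | apply ldist_spec].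
    simpl. lra.
  - intros [f [r [Hr Hf]]]. apply Hnot.
    assert (Hf' : forall a b, vnorm X (vsub X (f a) (f b)) = r * ldist a b).
    { intros a b. specialize (Hf a b I I). simpl in Hf. lra. }
    apply (T_embeds X Hsc (fun x => vsub X (Tlim X Hsc Hfin f r Hr Hf' x) (Tlim X Hsc Hfin f r Hr Hf' l2zero)) r Hr).
    + intros x y d Hd. rewrite vsub_common. apply Tlim_iso; auto.
    + apply vsub_diag.
Qed.
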